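(* Let $(V,E^+\uplus E^-)$ be a Correlation Clustering instance with optimum cost $\mathrm{opt}$, let $\mathcal C$ be a clustering of $V$ with $\mathrm{obj}(\mathcal C)\le3\,\mathrm{opt}$, and let $\mathcal K$ be the partition of $V$ constructed from $\mathcal C$ as described in the context (with $\beta=0.1$). Let $\mathcal C^*$ be an optimum clustering (i.e. $\mathrm{obj}(\mathcal C^* )=\mathrm{opt}$). Then every atom $K\in\mathcal K$ is contained in a single cluster of $\mathcal C^*$.
   Context: A Correlation Clustering instance consists of a finite vertex set $V$ and a partition $E^+\uplus E^-=\binom V2$ of unordered pairs of distinct vertices into $+$edges and $-$edges. For a clustering (partition) $\mathcal C$ of $V$, $\mathrm{obj}(\mathcal C)$ is the number of $+$edges between different parts plus the number of $-$edges inside parts; $\mathrm{opt}$ is its minimum. By convention every vertex has a $+$ self-loop, so the set $N^+_u$ of $+$neighbours of $u$ contains $u$. $A\triangle B$ denotes symmetric difference. Construction of $\mathcal K$ with $\beta=0.1$: for every non-singleton $C\in\mathcal C$, mark every $u\in C$ with $|N^+_u\triangle C|>\frac\beta2|C|$, and then, if at least $\frac{\beta|C|}{3}$ vertices of $C$ are marked, mark all vertices of $C$. $\mathcal K$ is obtained from $\mathcal C$ by removing every marked vertex from its cluster and making it a singleton cluster. The parts of $\mathcal K$ are called atoms. *)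

(* Defs.v *)
From mathcomp Require Import all_boot.
Set Implicit Arguments. Unset Strict Implicit. Unset Printing Implicit Defensive.

(* A Correlation Clustering instance: vertex set V (a finType) and a
   symmetric relation [plus] on V; for u != v, {u,v} is a +edge iff plus u v,
   and a -edge otherwise.  The value of plus on the diagonal is irrelevant. *)

Section CC.
Variables (V : finType) (plus : rel V).

Definition disagree (P : {set {set V}}) (u v : V) : bool :=
  if plus u v then pblock P u != pblock P v else pblock P u == pblock P v.

Definition obj (P : {set {set V}}) : nat :=
  #|[set e : {set V} | [exists u, exists v,
        [&& e == [set u; v], u != v & disagree P u v]]]|.

Definition optimal (P : {set {set V}}) : Prop :=
  partition P [set: V] /\
  forall Q : {set {set V}}, partition Q [set: V] -> obj P <= obj Q.

Definition Nplus (u : V) : {set V} := [set v | (v == u) || plus u v].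

Definition symdiff (A B : {set V}) : {set V} := (A :\: B) :|: (B :\: A).

(* first marking step, beta = 1/10: |N+_u \triangle C| > (beta/2)|C| *)
Definition marked1 (C : {set V}) (u : V) : bool :=
  #|C| < 20 * #|symdiff (Nplus u) C|.

(* final marking: C = cluster of u, non-singleton; u marked, or at least
   beta|C|/3 vertices of C are marked in the first step *)
Definition marked (P : {set {set V}}) (u : V) : bool :=
  let C := pblock P u in
  (1 < #|C|) &&
  (marked1 C u || (#|C| <= 30 * #|[set w in C | marked1 C w]|)).

Definition atoms (P : {set {set V}}) : {set {set V}} :=
  [set K | K != set0 &
     [exists C in P, K == [set w in C | ~~ marked P w]]]
  :|: [set [set u] | u in [set u | marked P u]].

End CC.

(* Main.v *)
Require Import Defs.
From mathcomp Require Import all_boot.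
From mathcomp Require Import zify.
Set Implicit Arguments. Unset Strict Implicit. Unset Printing Implicit Defensive.

Section Helpers.
Variables (V : finType) (plus : rel V) (plus_sym : symmetric plus).

Definition wgt (r : rel V) (u v : V) : nat :=
  (u != v) && (if plus u v then ~~ r u v else r u v).
Definition Ocnt (r : rel V) : nat := \sum_u \sum_v wgt r u v.

Lemma sum_card (A : {set V}) : \sum_v (v \in A : nat) = #|A|.
Proof. by rewrite -sum1_card [RHS]big_mkcond. Qed.

Lemma sum_swap (F : V -> V -> nat) :
  \sum_u \sum_v F v u = \sum_u \sum_v F u v.
Proof. by rewrite exchange_big. Qed.

Lemma sum_lt (F G : V -> nat) x0 :
  (forall u, F u <= G u) -> F x0 < G x0 -> \sum_u F u < \sum_u G u.
Proof.
move=> H H0; rewrite (bigD1 x0) //= [X in _ < X](bigD1 x0) //=.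
have : \sum_(i | i != x0) F i <= \sum_(i | i != x0) G i by apply: leq_sum.
lia.
Qed.

Lemma sum2_split (F G : V -> V -> nat) :
  \sum_u \sum_v (F u v + G u v) = \sum_u \sum_v F u v + \sum_u \sum_v G u v.
Proof. rewrite -big_split /=; apply: eq_bigr => u _; exact: big_split. Qed.

Lemma sum2_le (F G : V -> V -> nat) :
  (forall u v, F u v <= G u v) -> \sum_u \sum_v F u v <= \sum_u \sum_v G u v.
Proof. by move=> H; apply: leq_sum => u _; apply: leq_sum => v _. Qed.

Lemma contra_sum (r r' : rel V) (Pos Neg : V -> V -> nat) :
  (forall u v, wgt r' u v + Pos u v <= wgt r u v + Neg u v) ->
  Ocnt r' + \sum_u \sum_v Pos u v <= Ocnt r + \sum_u \sum_v Neg u v.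
Proof. by move=> H; rewrite /Ocnt -!sum2_split; apply: sum2_le. Qed.

Lemma disagree_sym P u v : disagree plus P u v = disagree plus P v u.
Proof. by rewrite /disagree plus_sym eq_sym. Qed.

Lemma obj_Ocnt P : 2 * obj plus P = Ocnt (fun u v => pblock P u == pblock P v).
Proof.
rewrite /Ocnt pair_bigA /=.
set Pr := [set p : V * V | (p.1 != p.2) && disagree plus P p.1 p.2].
have -> : \sum_p wgt (fun u v => pblock P u == pblock P v) p.1 p.2 = #|Pr|.
  rewrite -sum1_card [RHS]big_mkcond; apply: eq_bigr => p _; by rewrite inE.
rewrite /obj; set E := [set e : {set V} | _].
rewrite -[#|Pr|]sum1_card (partition_big (fun p => [set p.1; p.2]) (mem E)) /=; last first.
  move=> [a b]; rewrite inE /= => /andP [ab dab]; rewrite inE.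
  by apply/existsP; exists a; apply/existsP; exists b; rewrite eqxx ab dab.
rewrite mulnC -sum_nat_const; apply: eq_bigr => e; rewrite inE.
move=> /existsP [u /existsP [v /and3P [/eqP -> uv duv]]].
rewrite sum1_card (@eq_card _ _ [set (u, v); (v, u)]); last first.
  move=> [a b]; rewrite !inE /= !xpair_eqE unfold_in /= inE /=.
  apply/andP/idP.
    case=> /andP [ab _] /eqP E1.
    have : a \in [set u; v] by rewrite -E1 !inE eqxx.
    have : b \in [set u; v] by rewrite -E1 !inE eqxx orbT.
    rewrite !inE => /orP [] /eqP ea /orP [] /eqP eb; move: ab;
      by rewrite ea eb ?eqxx ?orbT.
  case/orP => /andP [/eqP -> /eqP ->]; rewrite ?uv ?duv /=.
    by rewrite eqxx.
  by rewrite eq_sym uv -disagree_sym duv setUC eqxx.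
by rewrite cards2 /= xpair_eqE negb_and uv.
Qed.

End Helpers.


Section Core.
Variables (V : finType) (plus : rel V) (plus_sym : symmetric plus).
Variables (r : rel V) (r_refl : reflexive r) (r_sym : symmetric r) (r_trans : transitive r).
Variables (C0 K : {set V}) (KC : K \subset C0).
Hypothesis hM : 30 * #|C0 :\: K| < #|C0|.
Hypothesis hbad : forall x, x \in K -> 20 * #|symdiff (Nplus plus x) C0| <= #|C0|.
Hypothesis hopt : forall r' : rel V, reflexive r' -> symmetric r' -> transitive r' ->
  Ocnt plus r <= Ocnt plus r'.

Lemma bad_of x v : v != x -> (v \in symdiff (Nplus plus x) C0) = (plus x v != (v \in C0)).
Proof.
move=> nvx; rewrite /symdiff /Nplus !inE (negbTE nvx) /=.
by case: (plus x v); case: (v \in C0).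
Qed.

Lemma sum_split_bool (a b : V -> bool) :
  \sum_v (a v && ~~ b v : nat) + \sum_v (a v && b v : nat) = \sum_v (a v : nat).
Proof. rewrite -big_split; apply: eq_bigr => v _ /=; by case: (a v); case: (b v). Qed.

Lemma case1 (hn : forall s, s \in K -> 6 * #|[set v in K | r s v]| + #|C0| <= 6 * #|K|)
  x : x \in K -> False.
Proof.
move=> xK.
pose r2 := fun u v => ((u \in K) == (v \in K)) && ((u \in K) || r u v).
have h2 : Ocnt plus r <= Ocnt plus r2.
  apply: hopt.
  - by move=> u; rewrite /r2 eqxx r_refl orbT.
  - by move=> u v; rewrite /r2 eq_sym r_sym; case: (u \in K); case: (v \in K).
  - move=> v u w; rewrite /r2; case: (u \in K); case: (v \in K); case: (w \in K) => //=.
    exact: r_trans.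
pose Pos u v := ([&& u \in K, v \in K, ~~ r u v & plus u v] : nat).
pose N1 u v := ([&& u \in K, v \in K, ~~ r u v & ~~ plus u v] : nat).
pose H2 u v := ([&& u \in K, v \notin K, r u v & plus u v] : nat).
have HH : Ocnt plus r2 + \sum_u \sum_v Pos u v <=
    Ocnt plus r + \sum_u \sum_v (N1 u v + H2 u v + H2 v u).
  apply: contra_sum => u v; rewrite /wgt /r2 /Pos /N1 /H2 (plus_sym v u) (r_sym v u).
  case: (eqVneq u v) => [<-|nuv]; first by rewrite r_refl /= !andbF.
  case: (u \in K); case: (v \in K); case: (plus u v); case: (r u v) => //.
have hk : forall u, u \in K ->
    \sum_v (N1 u v + H2 u v + H2 u v) < \sum_v Pos u v.
  move=> u uK.
  have pw : forall v, N1 u v + H2 u v + H2 u v + ((v \in K) && ~~ r u v) <=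
      Pos u v + 2 * (v \in symdiff (Nplus plus u) C0) + 2 * (v \in C0 :\: K).
    move=> v; rewrite /N1 /H2 /Pos uK.
    case: (eqVneq v u) => [->|nvu]; first by rewrite r_refl uK /= ?andbF.
    rewrite bad_of // inE.
    have := subsetP KC v.
    by case: (v \in K) => [/(_ isT) -> |_]; case: (v \in C0); case: (plus u v); case: (r u v).
  have := leq_sum (index_enum V) (P := xpredT) (fun v _ => pw v).
  rewrite !big_split /= !sum_card !big1_eq.
  have := sum_split_bool (fun v => v \in K) (r u).
  have -> : \sum_v ((v \in K) && r u v : nat) = #|[set v in K | r u v]|.
    by rewrite -sum_card; apply: eq_bigr => v _; rewrite inE.
  rewrite sum_card.
  have := hbad uK; have := hn u uK.
  have := cardsD C0 K; rewrite (setIidPr KC); have := subset_leq_card KC.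
  lia.
have lt : \sum_u \sum_v (N1 u v + H2 u v + H2 u v) < \sum_u \sum_v Pos u v.
  apply: (@sum_lt _ _ _ x) => [u|]; last exact: hk.
  case uK: (u \in K); first exact: ltnW (hk u uK).
  by rewrite big1 // => v _; rewrite /N1 /H2 uK.
rewrite !sum2_split (sum_swap H2) in HH lt.
lia.
Qed.

Lemma trb a b c : (r a b && r b c) ==> r a c.
Proof. by apply/implyP => /andP [h1 h2]; apply: r_trans h2. Qed.

Lemma case2 s0 (s0K : s0 \in K)
  (hS : 6 * #|K| < 6 * #|[set v in K | r s0 v]| + #|C0|)
  x y (xK : x \in K) (yK : y \in K) (nxy : ~~ r x y) : False.
Proof.
pose inS v := (v \in K) && r s0 v.
pose inT v := (v \in K) && ~~ r s0 v.
pose inA v := (v \notin K) && r s0 v.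
have cS : #|[set v in K | r s0 v]| = \sum_v (inS v : nat).
  by rewrite -sum_card; apply: eq_bigr => v _; rewrite inE.
have [t0 t0T] : exists t0, inT t0.
  case ex: (r s0 x); last by exists x; rewrite /inT xK ex.
  case ey: (r s0 y); last by exists y; rewrite /inT yK ey.
  by move: nxy; rewrite (r_trans (y := s0) _ ey) // r_sym.
pose r3 := fun u v => (inS u == inS v) && (inS u || r u v).
have h3 : Ocnt plus r <= Ocnt plus r3.
  apply: hopt.
  - by move=> u; rewrite /r3 eqxx r_refl orbT.
  - by move=> u v; rewrite /r3 eq_sym r_sym; case: (inS u); case: (inS v).
  - move=> v u w; rewrite /r3; case: (inS u); case: (inS v); case: (inS w) => //=.
    exact: r_trans.
pose F u v := ([&& inS u, inA v & ~~ plus u v] : nat).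
pose G u v := ([&& inS u, inA v & plus u v] : nat).
have HH : Ocnt plus r3 + \sum_u \sum_v (F u v + F v u) <=
    Ocnt plus r + \sum_u \sum_v (G u v + G v u).
  apply: contra_sum => u v; rewrite /wgt /r3 /F /G /inS /inA (plus_sym v u).
  case: (eqVneq u v) => [<-|nuv]; first by rewrite r_refl /=; case: (u \in K).
  move: (trb u s0 v) (trb s0 u v) (trb s0 v u); rewrite (r_sym u s0) (r_sym v u).
  by case: (u \in K); case: (v \in K); case: (plus u v); case: (r u v); case: (r s0 u); case: (r s0 v).
have FG : \sum_u \sum_v F u v <= \sum_u \sum_v G u v.
  by rewrite !sum2_split (sum_swap F) (sum_swap G) in HH; lia.
have [s sS sFG] : exists2 s, inS s & \sum_v F s v <= \sum_v G s v.
  case: (boolP [exists s, inS s && (\sum_v F s v <= \sum_v G s v)]) =>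
    [/existsP [s /andP [? ?]]|/existsPn hn]; first by exists s.
  exfalso.
  have : \sum_u \sum_v G u v < \sum_u \sum_v F u v; last by lia.
  have s0S : inS s0 by rewrite /inS s0K r_refl.
  apply: (@sum_lt _ _ _ s0) => [u|].
    case uS: (inS u).
      by move: (hn u); rewrite uS /= -ltnNge; exact: ltnW.
    by rewrite big1 // => v _; rewrite /G uS.
  by move: (hn s0); rewrite s0S /= -ltnNge.
pose h u := if inT u then s0 else u.
pose r1 u v := r (h u) (h v).
have h1 : Ocnt plus r <= Ocnt plus r1.
  apply: hopt.
  - by move=> u; rewrite /r1 r_refl.
  - by move=> u v; rewrite /r1 r_sym.
  - by move=> a b c; rewrite /r1; apply: r_trans.
pose J u v := ([&& inT u, ~~ inT v, r s0 v & plus u v] : nat).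
pose Z u v := ([&& inT u, inT v, u != v & ~~ plus u v] : nat).
pose H u v := ([&& inT u, ~~ inT v, r s0 v & ~~ plus u v] +
               [&& inT u, ~~ inT v, ~~ r s0 v, r u v & plus u v] : nat).
have HH1 : Ocnt plus r1 + \sum_u \sum_v (J u v + J v u) <=
    Ocnt plus r + \sum_u \sum_v (Z u v + H u v + H v u).
  apply: contra_sum => u v.
  have e1 : r1 u v = if inT u then (if inT v then true else r s0 v)
                     else (if inT v then r s0 u else r u v).
    by rewrite /r1 /h; case: (inT u); case: (inT v); rewrite ?r_refl // r_sym.
  rewrite /wgt e1 /J /Z /H /inT (plus_sym v u) (r_sym v u).
  case: (eqVneq u v) => [<-|nuv]; first by rewrite r_refl /=; case: (u \in K); case: (r s0 u).
  move: (trb u s0 v) (trb s0 u v) (trb s0 v u); rewrite (r_sym u s0) (r_sym v u).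
  by case: (u \in K); case: (v \in K); case: (plus u v); case: (r u v); case: (r s0 u); case: (r s0 v).
have sK : s \in K by case/andP: sS.
have rs : r s0 s by case/andP: sS.
have ht : forall t, inT t ->
    \sum_v (Z t v + H t v + H t v) < \sum_v (J t v + J t v).
  move=> t tT.
  have tK : t \in K by case/andP: tT.
  have nt : r s0 t = false by case/andP: tT => _ /negbTE.
  have pw : forall v, Z t v + H t v + H t v + 2 * inS v + 2 * G s v <=
      J t v + J t v + 4 * (v \in symdiff (Nplus plus t) C0)
      + 4 * (v \in symdiff (Nplus plus s) C0) + 2 * (v \in C0 :\: K) + 2 * F s v.
    move=> v.
    case: (eqVneq v t) => [->|nvt].
      by rewrite /Z /H /G /inS /inA /inT tK nt eqxx /= !andbF.
    rewrite (bad_of nvt).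
    have vC := subsetP KC v.
    have := trb s0 v t; rewrite nt implybF => ntv.
    case: (eqVneq v s) => [evs|nvs].
      rewrite evs in nvt ntv *.
      rewrite /Z /H /G /F /J /inS /inA /inT sK rs tK nt (subsetP KC s sK) /=.
      move: ntv; rewrite rs r_sym /=.
      by case: (plus t s); case: (r t s); case: (s \in symdiff (Nplus plus s) C0);
        case: (s \in C0 :\: K).
    rewrite (bad_of nvs) /Z /H /G /F /J /inS /inA /inT sK rs tK nt inE (eq_sym t v) nvt /=.
    move: vC ntv; rewrite [r t v]r_sym.
    case: (v \in K) => [/(_ isT) ->|_]; case: (v \in C0); case: (plus t v); case: (plus s v);
      by case: (r s0 v); case: (r v t); by [].
  have := leq_sum (index_enum V) (P := xpredT) (fun v _ => pw v).
  rewrite !big_split /= !sum_card !big1_eq.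
  have := hbad tK; have := hbad sK.
  have := cardsD C0 K; rewrite (setIidPr KC); have := subset_leq_card KC.
  rewrite cS in hS.
  lia.
have lt : \sum_u \sum_v (Z u v + H u v + H u v) < \sum_u \sum_v (J u v + J u v).
  apply: (@sum_lt _ _ _ t0) => [u|]; last exact: ht.
  case uT: (inT u); first exact: ltnW (ht u uT).
  by rewrite big1 // => v _; rewrite /Z /H /J uT.
rewrite (sum2_split (fun u v => Z u v + H u v) (fun u v => H v u)) (sum_swap H)
  -(sum2_split (fun u v => Z u v + H u v) H) in HH1.
rewrite (sum2_split J (fun u v => J v u)) (sum_swap J) -(sum2_split J J) in HH1.
lia.
Qed.

Lemma core x y : x \in K -> y \in K -> r x y.
Proof.
move=> xK yK; apply/idPn => nxy.
case: (boolP [exists s0 in K, 6 * #|K| < 6 * #|[set v in K | r s0 v]| + #|C0|]).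
  by move/exists_inP => [s0 s0K hS]; exact: (case2 s0K hS xK yK nxy).
move/exists_inPn => hn; apply: (case1 _ xK) => s sK; rewrite leqNgt; exact: hn s sK.
Qed.
End Core.

Theorem lemma8 (V : finType) (plus : rel V) (plus_sym : symmetric plus)
  (C Cstar : {set {set V}})
  (hC : partition C [set: V])
  (hopt : optimal plus Cstar)
  (h3 : obj plus C <= 3 * obj plus Cstar) :
  forall K, K \in atoms plus C -> exists2 D, D \in Cstar & K \subset D.
Proof.
case: hopt => hCs hmin.
have covS := cover_partition hCs.
have inpb u : u \in pblock Cstar u by rewrite mem_pblock covS inE.
have pbm u : pblock Cstar u \in Cstar by apply: pblock_mem; rewrite covS inE.
move=> K; rewrite /atoms inE => /orP []; last first.
  case/imsetP => u _ ->; exists (pblock Cstar u) => //.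
  by rewrite sub1set.
rewrite inE => /andP [Kn0 /exists_inP [C0 C0in /eqP eK]].
case/and3P: hC => _ trC _.
case/set0Pn: Kn0 => k0 k0K.
have KC : K \subset C0 by apply/subsetP => w; rewrite eK inE => /andP [].
pose rs := fun u v => pblock Cstar u == pblock Cstar v.
suff H : forall y, y \in K -> rs k0 y.
  exists (pblock Cstar k0) => //; apply/subsetP => y yK.
  by have := H y yK; rewrite /rs eq_sym => /eqP <-.
move=> y yK.
case: (leqP #|C0| 1) => [c1|c1].
  have k0C := subsetP KC k0 k0K; have yC := subsetP KC y yK.
  by rewrite (card_le1_eqP c1 k0 y k0C yC) /rs.
have pbC w : w \in C0 -> pblock C w = C0 by move=> wC; exact: def_pblock trC C0in wC.
have k0C := subsetP KC k0 k0K.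
move: (k0K); rewrite eK inE => /andP [_]; rewrite /marked /= pbC // c1 /= negb_or.
move=> /andP [_ hbig].
rewrite -ltnNge in hbig.
apply: (core plus_sym (r := rs) _ _ _ KC) => //.
- by move=> u; rewrite /rs.
- by move=> u v; rewrite /rs eq_sym.
- by move=> a b c; rewrite /rs => /eqP -> /eqP ->.
- apply: leq_ltn_trans (hbig); rewrite leq_mul2l /=; apply: subset_leq_card.
  apply/subsetP => w; rewrite !inE eK inE => /andP [h wC]; move: h; rewrite wC /= negbK => h.
  move: h; rewrite /marked /= pbC // c1 /= => /orP [] // h'.
  by move: (leq_ltn_trans h' hbig); rewrite ltnn.
- move=> x xK; have xC := subsetP KC x xK.
  move: xK; rewrite eK inE => /andP [_]; rewrite /marked /= pbC // c1 /= negb_or.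
  move=> /andP [h _].
  by rewrite leqNgt.
- move=> r' r'1 r'2 r'3.
  pose Q := equivalence_partition r' [set: V].
  have eqv : {in [set: V] & &, equivalence_rel r'}.
    move=> a b c _ _ _; split; first exact: r'1.
    move=> hab; apply/idP/idP => h.
      by apply: r'3 h; rewrite r'2.
    exact: r'3 hab h.
  have hQ : partition Q [set: V] := equivalence_partitionP eqv.
  have covQ := cover_partition hQ.
  case/and3P: (hQ) => _ trQ _.
  have EQ u v : (pblock Q u == pblock Q v) = r' u v.
    rewrite eq_pblock //; last by rewrite covQ inE.
    by apply: pblock_equivalence_partition.
  have := hmin Q hQ; rewrite -(leq_pmul2l (isT : 0 < 2)) !obj_Ocnt //.
  suff -> : Ocnt plus (fun u v => pblock Q u == pblock Q v) = Ocnt plus r' by [].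
  by apply: eq_bigr => u _; apply: eq_bigr => v _; rewrite /wgt EQ.
Qed.
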